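(* Consider the Qs predictor with queue capacity $\mathrm{qcap}\ge2$ processing an arbitrary sequence of items. For any item $i$ with a queue $q(i)$ (so $|q(i)|\le\mathrm{qcap}$), let $Y_i:=\sum_{0\le j<|q(i)|}c_j-1$ and use the estimate $Q(i)=(|q(i)|-1)/Y_i$ (and $Q(i)=0$ when $|q(i)|\le1$ or $i$ has no queue). Then for every time $t\ge1$: (1) $Q^{(t)}(i)$, when nonzero, has the form $a/b$ with $a,b$ integers and $b\ge a\ge1$; (2) for an item $i$ with a queue at time $t$: if $i$ is not observed at time $t$, then $Y_i^{(t+1)}=Y_i^{(t)}+1$ or $i$ is removed from the queue map; if $i$ is observed at time $t$, then $Y_i^{(t+1)}\le Y_i^{(t)}$ when $|q^{(t)}(i)|=\mathrm{qcap}$, and $Y_i^{(t+1)}=Y_i^{(t)}+1$ when $|q^{(t)}(i)|<\mathrm{qcap}$; (3) if $i$ is observed at time $t$, then $Q^{(t+1)}(i)\ge Q^{(t)}(i)$; if $i$ is not observed at time $t$, then $Q^{(t+1)}(i)<Q^{(t)}(i)$ or $Q^{(t+1)}(i)=Q^{(t)}(i)=0$.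
   Context: The Qs predictor keeps a map from items to queues of positive integer counts (''cells''), the newest cell being $c_0$ (''cell0''), the older cells $c_1,c_2,\dots$; each queue holds at most $\mathrm{qcap}$ cells. At each time $t$, the predictor first outputs its estimates $Q^{(t)}$, then observes the item $o^{(t)}$ and updates: if $o^{(t)}$ has no queue, an empty queue is created for it; then the queue of $o^{(t)}$ receives a positive update (if it has fewer than $\mathrm{qcap}$ cells its size grows by one; all existing cells shift one position older, the oldest being discarded if the queue was at capacity; and a new cell $c_0=1$ is created), while every other existing queue receives a negative update (its $c_0$ is incremented by $1$). Occasionally (pruning) items may be removed from the map together with their queues. $q^{(t)}(i)$, $Y_i^{(t)}$ and $Q^{(t)}(i)$ denote the queue of $i$, the quantity $Y_i$, and the estimate at time $t$, i.e. before the update at time $t$. *)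

(* Defs.v *)
From mathcomp Require Import all_boot all_order all_algebra.
Set Implicit Arguments. Unset Strict Implicit. Unset Printing Implicit Defensive.
Import Order.TTheory GRing.Theory Num.Theory.

(* A queue is a seq of counts, head = newest cell c_0, then c_1, c_2, ... *)
Definition queue := seq nat.
Definition qmap (T : eqType) := T -> option queue.

Definition empty_qmap (T : eqType) : qmap T := fun _ => None.

Definition pos_update (qcap : nat) (q : queue) : queue :=
  1 :: take qcap.-1 q.

Definition neg_update (q : queue) : queue :=
  match q with [::] => [::] | c :: r => c.+1 :: r end.

Definition update (T : eqType) (qcap : nat) (M : qmap T) (x : T) : qmap T :=
  fun j => if j == x then Some (pos_update qcap (odflt [::] (M j)))
           else omap neg_update (M j).

(* One step from time t to t+1: update by the observation, then pruning may
   remove items other than the item just observed. *)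
Definition qs_step (T : eqType) (qcap : nat) (M : qmap T) (x : T) (M' : qmap T) : Prop :=
  M' x = update qcap M x x /\
  forall j, j != x -> M' j = None \/ M' j = update qcap M x j.

(* A run: S t is the map at time t (before the update at time t), t >= 1,
   starting from the empty map; o t is the item observed at time t. *)
Definition qs_run (T : eqType) (qcap : nat) (o : nat -> T) (S : nat -> qmap T) : Prop :=
  S 1%N = @empty_qmap T /\ forall t, (1 <= t)%N -> qs_step qcap (S t) (o t) (S t.+1).

Local Open Scope ring_scope.

Definition Yq (q : queue) : int := (sumn q)%:Z - 1.

Definition est_q (q : queue) : rat :=
  if (size q <= 1)%N then 0 else (size q).-1%:R / (Yq q)%:~R.

Definition Qest (T : eqType) (M : qmap T) (i : T) : rat :=
  match M i with None => 0 | Some q => est_q q end.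

(* Main.v *)
Require Import Defs.
From mathcomp Require Import all_boot all_order all_algebra.
From mathcomp Require Import zify.
Import Order.TTheory GRing.Theory Num.Theory.
Local Open Scope ring_scope.

Definition good (qcap : nat) (q : queue) :=
  [&& q != [::], all (fun c => 0 < c)%N q & (size q <= qcap)%N].

Lemma size_le_sumn (q : queue) : all (fun c => 0 < c)%N q -> (size q <= sumn q)%N.
Proof. elim: q => //= c q IH /andP[c0 /IH]; lia. Qed.

Lemma inv_run (T : eqType) (qcap : nat) (o : nat -> T) (M : nat -> qmap T) :
  (2 <= qcap)%N -> qs_run qcap o M ->
  forall t, (1 <= t)%N -> forall j q, M t j = Some q -> good qcap q.
Proof.
move=> hq [H1 Hs]; elim=> // t IH _ j q.
case: t IH => [|t] IH; first by rewrite H1.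
have [Hx Hj] := Hs t.+1 isT.
have IH' := IH isT.
have gpos: forall q0, (size q0 <= qcap)%N -> all (fun c => 0 < c)%N q0 ->
   good qcap (pos_update qcap q0).
  move=> q0 s0 a0; rewrite /good /pos_update /= size_take.
  apply/andP; split; last by case: ifP; lia.
  by move: a0; rewrite -{1}(cat_take_drop qcap.-1 q0) all_cat => /andP[].
case: (eqVneq j (o t.+1)) => [->|ne].
  rewrite Hx /update eqxx => -[<-]; apply: gpos.
    by case E: (M t.+1 (o t.+1)) => [q0|] //=; have /and3P[] := IH' _ _ E.
  by case E: (M t.+1 (o t.+1)) => [q0|] //=; have /and3P[] := IH' _ _ E.
case: (Hj j ne) => ->; first by [].
rewrite /update (negbTE ne).
case E: (M t.+1 j) => [q0|] //= [<-].
have /and3P[] := IH' _ _ E.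
by rewrite /good; case: q0 {E} => //= c r _ /andP[_ ->] ->.
Qed.
Lemma natz_r (n : nat) : ((n%:Z)%:~R : rat) = n%:R.
Proof. reflexivity. Qed.
Lemma div_le (a b c d : nat) : (0 < b)%N -> (0 < d)%N -> (a * d <= c * b)%N ->
  (a%:R / b%:R : rat) <= c%:R / d%:R.
Proof.
move=> b0 d0 h.
rewrite ler_pdivrMr ?ltr0n // mulrAC ler_pdivlMr ?ltr0n // -!natrM ler_nat.
by []. Qed.
Lemma div_lt (a b c d : nat) : (0 < b)%N -> (0 < d)%N -> (a * d < c * b)%N ->
  (a%:R / b%:R : rat) < c%:R / d%:R.
Proof.
move=> b0 d0 h.
rewrite ltr_pdivrMr ?ltr0n // mulrAC ltr_pdivlMr ?ltr0n // -!natrM ltr_nat.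
by []. Qed.

Lemma est_qE (q : queue) : (0 < sumn q)%N ->
  est_q q = if (size q <= 1)%N then 0 else (size q).-1%:R / (sumn q).-1%:R.
Proof.
move=> s0; rewrite /est_q /Yq; case: ifP => // _; congr (_ / _).
have -> : (sumn q)%:Z - 1 = (sumn q).-1%:Z by lia.
reflexivity.
Qed.

Lemma sum_full (q : queue) n : all (fun c => 0 < c)%N q -> size q = n.+1 ->
  (1 + sumn (take n q) <= sumn q)%N.
Proof.
case/lastP: q => // q' c; rewrite size_rcons -cats1 all_cat /= => /andP[_ /andP[c0 _]] [e].
by rewrite -e take_size_cat // sumn_cat /=; lia.
Qed.


Theorem lemma13 (T : eqType) (qcap : nat) (o : nat -> T) (M : nat -> qmap T) :
  (2 <= qcap)%N -> qs_run qcap o M ->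
  forall t : nat, (1 <= t)%N ->
  (* (1) *)
  (forall i : T, Qest (M t) i != 0 ->
     exists a b : int, 1 <= a /\ a <= b /\ Qest (M t) i = a%:~R / b%:~R) /\
  (* (2) *)
  (forall (i : T) (q : queue), M t i = Some q ->
     (o t != i ->
        M t.+1 i = None \/ exists q', M t.+1 i = Some q' /\ Yq q' = Yq q + 1) /\
     (o t = i ->
        exists q', M t.+1 i = Some q' /\
          ((size q = qcap)%N -> Yq q' <= Yq q) /\
          ((size q < qcap)%N -> Yq q' = Yq q + 1))) /\
  (* (3) *)
  (forall i : T,
     (o t = i -> Qest (M t) i <= Qest (M t.+1) i) /\
     (o t != i -> Qest (M t.+1) i < Qest (M t) i \/
                  (Qest (M t.+1) i = 0 /\ Qest (M t) i = 0))).
Proof.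
move=> hq run t ht.
have G := @inv_run _ _ _ _ hq run _ ht.
have G' := @inv_run _ _ _ _ hq run _ (leqW ht).
have [Hx Hj] := run.2 t ht.
have Mx : M t.+1 (o t) = Some (pos_update qcap (odflt [::] (M t (o t)))).
  by rewrite Hx /update eqxx.
have Mj : forall j, j != o t -> M t.+1 j = None \/ M t.+1 j = omap neg_update (M t j).
  by move=> j ne; case: (Hj j ne) => ->; [left|right; rewrite /update (negbTE ne)].
have Gs : forall (M0 : qmap T) j q, (forall j q, M0 j = Some q -> good qcap q) -> M0 j = Some q ->
   [/\ (0 < size q)%N, (size q <= sumn q)%N & (size q <= qcap)%N].
  move=> M0 j q GG E; have /and3P[nq ap sq] := GG _ _ E.
  by split => //; [case: q nq {E ap sq} | apply: size_le_sumn].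
split.
  move=> i; rewrite /Qest; case E: (M t i) => [q|]; last by rewrite eqxx.
  have [s0 ss _] := Gs _ _ _ G E.
  rewrite est_qE; last by lia.
  case: ifP => // s2 _; exists (size q).-1%:Z, (sumn q).-1%:Z.
  by split; [lia|split; [lia|reflexivity]].
split.
  move=> i q E; have [s0 ss sq] := Gs _ _ _ G E; split.
    move=> ne; have ne' : i != o t by rewrite eq_sym.
    case: (Mj i ne') => ->; [by left|right]; rewrite E /=; exists (neg_update q); split=> //.
    by case: q s0 {E ss sq} => //= c r _; rewrite /Yq /=; lia.
  move=> oi; rewrite -oi in E *; rewrite Mx E /=.
  eexists; split; first reflexivity; split.
    move=> sz; rewrite /Yq /pos_update.
    have /and3P[_ ap _] := G _ _ E.
    have e : size q = qcap.-1.+1 by lia.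
    by have := sum_full _ _ ap e; rewrite /=; lia.
  move=> sz; rewrite /pos_update take_oversize; last by lia.
  by rewrite /Yq /=; lia.
move=> i; split.
  move=> oi; rewrite -oi /Qest Mx.
  case E: (M t (o t)) => [q|] /=; last by rewrite /est_q.
  have [s0 ss sq] := Gs _ _ _ G E.
  have [s0' ss' sq'] := Gs _ _ _ G' Mx.
  rewrite E /= in s0' ss' sq'.
  have sp : (0 < sumn (pos_update qcap q))%N by rewrite /pos_update /=; lia.
  rewrite (est_qE _ sp) est_qE; last lia.
  case: (ltnP (size q) qcap) => hs.
    rewrite /pos_update take_oversize /=; last by lia.
    case: (leqP (size q) 1) => s1.
      case: ifP => // _; apply: divr_ge0; apply: ler0n.
    rewrite ifN; last by lia.
    apply: div_le; nia.
  have /and3P[_ ap _] := G _ _ E.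
  have e : size q = qcap.-1.+1 by lia.
  have hs' := sum_full _ _ ap e.
  move: s0' ss' sq'; rewrite /pos_update /= size_take.
  rewrite ifT; last by lia.
  move=> s0' ss' sq'.
  rewrite ifN; last by lia.
  rewrite ifN; last by lia.
  apply: div_le; try lia.
  rewrite e /=; apply: leq_mul => //; lia.
move=> ne; have ne' : i != o t by rewrite eq_sym.
rewrite /Qest; case E: (M t i) => [q|]; last by case: (Mj i ne') => ->; rewrite ?E; right.
have [s0 ss sq] := Gs _ _ _ G E.
have ge0 : 0 <= est_q q.
  rewrite est_qE; last by lia.
  case: ifP => // _; apply: divr_ge0; apply: ler0n.
case: (Mj i ne') => ->.
  by move: ge0; rewrite le_eqVlt => /orP[/eqP<-|]; [right|left].
rewrite E /=; case: q s0 ss sq {E ge0} => //= c r _ ss sq.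
rewrite !est_qE /=; try lia.
case: ifP => s1; [by right|left].
apply: div_lt; nia.
Qed.
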